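(* Fix $\epsilon>0$, $\delta>0$ and an integer $L\geq 2$ such that $2\epsilon<\delta\leq 1/L$, and suppose the prior distribution of $v^*$ is uniform on $[0,1)$. Then \[ \log\frac{1}{\epsilon}\ \leq\ N_B^*(\epsilon,\delta,L)\ \leq\ L\log\frac{1}{L\epsilon}+L-1 . \]
   Context: Bayesian private learning model. The true value $v^*$ is random with a prior distribution $P_{v^*}$ on $[0,1)$ known to everyone. A learner submits queries $q_k\in[0,1)$ and receives $r_k=\mathbb{I}(v^*\geq q_k)$. A learner strategy $\phi$ of length $N$ (which may depend on $P_{v^*}$) uses a random seed $Y$ uniform on $\{1,\dots,\mathcal{Y}\}$, independent of $v^*$, with $q_1=\phi_1(Y)$, $q_k=\phi_k(r_1,\dots,r_{k-1},Y)$, and estimate $\hat x=\phi^E(r_1,\dots,r_N,Y)\in[0,1)$; $\Phi_N$ is the set of such strategies. An adversary strategy $\psi$ maps the prior $P_{v^*}$, the learner strategy $\phi$ and the observed query sequence $\overline q=(q_1,\dots,q_N)$ (but not the responses) to a random estimate $\hat x^a\in[0,1)$; $\Psi$ denotes the set of all adversary strategies. A learner strategy $\phi\in\Phi_N$ is $(\epsilon,\delta,L)$-B-private if (1) $\mathbb{P}(|\hat x(v^*,Y)-v^*|\leq\epsilon/2)=1$ (probability over $v^*$ and $Y$), and (2) for every adversary strategy $\psi\in\Psi$, $\mathbb{P}(|\hat x^a-v^*|\leq\delta/2)\leq 1/L$ (probability over $v^*$, $Y$ and $\hat x^a$). $N_B^*(\epsilon,\delta,L)=\min\{N\in\mathbb{N}:\exists\,\phi\in\Phi_N\text{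 that is }(\epsilon,\delta,L)\text{-B-private}\}$. Logarithms are base 2 and non-integer quantities are rounded up to the nearest integer. *)

(* Defs.v *)
From HB Require Import structures.
From mathcomp Require Import all_boot all_order all_algebra.
From mathcomp Require Import all_classical all_reals all_analysis.
Set Implicit Arguments. Unset Strict Implicit. Unset Printing Implicit Defensive.
Import Order.TTheory GRing.Theory Num.Theory.
Local Open Scope classical_set_scope.
Local Open Scope ring_scope.

Section BPrivate.
Variable R : realType.

(* The seed Y is uniform on
   {0, ..., seeds - 1} (a relabelling of {1,...,𝒴}).  The k-th query
   (k = 1..N) is [query h y] where h = (r_1,...,r_{k-1}) is the history of
   responses; the estimate is [estimate (r_1,...,r_N) y]. *)
Record strategy (N : nat) := Strategy {
  seeds : nat;
  seeds_gt0 : (0 < seeds)%N;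
  query : seq bool -> nat -> R;
  estimate : seq bool -> nat -> R;
  query_range : forall h y, 0 <= query h y < 1;
  estimate_range : forall h y, 0 <= estimate h y < 1 }.

Fixpoint responses (q : seq bool -> R) (v : R) (n : nat) : seq bool :=
  match n with
  | 0 => [::]
  | n.+1 => let h := responses q v n in rcons h (q h <= v)
  end.

Definition queries N (phi : strategy N) (v : R) (y : nat) : seq R :=
  [seq query phi (responses (query phi ^~ y) v k) y | k <- iota 0 N].

Definition learner_estimate N (phi : strategy N) (v : R) (y : nat) : R :=
  estimate phi (responses (query phi ^~ y) v N) y.

(* P(E) for v* uniform on [0,1) and Y uniform on {0,...,seeds-1},
   independent *)
Definition probVY N (phi : strategy N) (E : R -> nat -> Prop) : \bar R :=
  ((seeds phi)%:R^-1)%:E *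
  \sum_(y < seeds phi)
     lebesgue_measure [set v : R | (0 <= v < 1)%R /\ E v y].

(* An adversary: given the observed query sequence (prior and learner
   strategy are fixed), outputs a random estimate in [0,1), described by
   its (conditional) distribution. *)
Definition adversary := seq R -> probability (measurableTypeR R) R.

Definition valid_adversary (psi : adversary) : Prop :=
  forall qs, psi qs `[0%R, 1%R[%classic = 1%E.

(* P(|x^a - v*| <= delta/2), with x^a drawn from psi(q) independently
   given the queries *)
Definition adversary_success N (phi : strategy N) (psi : adversary)
    (delta : R) : \bar R :=
  ((seeds phi)%:R^-1)%:E *
  \sum_(y < seeds phi)
    \int[lebesgue_measure]_(v in `[0%R, 1%R[)
       psi (queries phi v y) [set x : R | (`|x - v| <= delta / 2)%R].

Definition B_private N (phi : strategy N) (eps delta : R) (L : nat) : Prop :=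
  probVY phi (fun v y => `|learner_estimate phi v y - v| <= eps / 2) = 1%E
  /\ forall psi : adversary, valid_adversary psi ->
       (adversary_success phi psi delta <= (L%:R^-1)%:E)%E.

Definition is_NBstar (eps delta : R) (L N : nat) : Prop :=
  (exists phi : strategy N, B_private phi eps delta L) /\
  forall M, (exists phi : strategy M, B_private phi eps delta L) -> (N <= M)%N.

Definition log2 (x : R) : R := ln x / ln 2.

End BPrivate.

(* Main.v *)
Require Import Defs.
From HB Require Import structures.
From mathcomp Require Import all_boot all_order all_algebra.
From mathcomp Require Import all_classical all_reals all_analysis.
From mathcomp Require Import ring lra zify.
Import Order.TTheory GRing.Theory Num.Theory.
Local Open Scope ring_scope.

Definition w {R : realType} (t : nat) : R := (2 ^+ t)^-1.

Fixpoint loF {R : realType} (b : nat -> bool) (t : nat) : R :=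
  if t is t'.+1 then loF b t' + (if b t' then w t'.+1 else 0) else 0.

Lemma w_gt0 (R : realType) t : 0 < (w t : R).
Proof. by rewrite /w invr_gt0 exprn_gt0. Qed.

Lemma wS (R : realType) t : (w t : R) = w t.+1 + w t.+1.
Proof.
have h : (2:R)^-1 + 2^-1 = 1 by field.
by rewrite /w exprS invfM -mulrDl h mul1r.
Qed.

Lemma w0 (R : realType) : (w 0 : R) = 1.
Proof. by rewrite /w expr0 invr1. Qed.

Lemma loF_ge0 (R : realType) b t : 0 <= (loF b t : R).
Proof.
elim: t => [|t IH] //=; apply: addr_ge0 => //.
by case: (b t) => //; apply/ltW/w_gt0.
Qed.

Lemma loF_step (R : realType) b t :
  (loF b t.+1 : R) + w t.+1 <= loF b t + w t.
Proof.
rewrite /= (wS _ t); have := w_gt0 R t.+1; case: (b t); lra.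
Qed.

Lemma loF_le1 (R : realType) b t : (loF b t : R) + w t <= 1.
Proof.
elim: t => [|t IH]; first by rewrite /= w0 add0r.
exact: le_trans (loF_step _ _ _) IH.
Qed.

Lemma loF_mono (R : realType) b t t' : (t <= t')%N -> (loF b t : R) <= loF b t'.
Proof.
elim: t' => [|t' IH]; first by rewrite leqn0 => /eqP ->.
rewrite leq_eqVlt => /orP [/eqP -> //|]; rewrite ltnS => /IH /le_trans; apply.
rewrite /= lerDl; case: (b t') => //; exact/ltW/w_gt0.
Qed.

Lemma loF_mono2 (R : realType) b t t' : (t <= t')%N ->
  (loF b t' : R) + w t' <= loF b t + w t.
Proof.
elim: t' => [|t' IH]; first by rewrite leqn0 => /eqP ->.
rewrite leq_eqVlt => /orP [/eqP -> //|]; rewrite ltnS => /IH.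
exact: le_trans (loF_step _ _ _).
Qed.

Lemma eq_loF (R : realType) b1 b2 t : (forall i, (i < t)%N -> b1 i = b2 i) ->
  (loF b1 t : R) = loF b2 t.
Proof.
elim: t => [|t IH] H //=; rewrite IH ?H // => i Hi; apply: H; exact: ltnW.
Qed.

Fixpoint LO {R : realType} (u : R) (t : nat) : R :=
  if t is t'.+1 then
    (if LO u t' + w t'.+1 <= u then LO u t' + w t'.+1 else LO u t')
  else 0.

Definition bitv {R : realType} (u : R) t : bool := LO u t + w t.+1 <= u.

Lemma LO_loF (R : realType) (u : R) t : LO u t = loF (bitv u) t.
Proof.
elim: t => [|t IH] //=; rewrite -/(bitv u t) -IH.
by case: (bitv u t); rewrite ?addr0.
Qed.

Lemma LO_inv (R : realType) (u : R) t : 0 <= u < 1 -> LO u t <= u < LO u t + w t.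
Proof.
move=> /andP [u0 u1]; elim: t => [|t IH]; first by rewrite /= w0 add0r u0.
move: IH => /andP [h1 h2] /=; rewrite (wS _ t) in h2.
by case: ifP => H; apply/andP; split; lra.
Qed.

Lemma cell_char (R : realType) (u : R) (b : nat -> bool) m : 0 <= u < 1 ->
  (forall t, (t < m)%N -> bitv u t = b t) <-> (loF b m <= u < loF b m + w m).
Proof.
move=> Hu; split.
  move=> H; rewrite -(@eq_loF _ (bitv u)) // -LO_loF; exact: LO_inv.
move=> /andP [h1 h2].
suff H : forall t, (t < m)%N -> (forall i, (i < t)%N -> bitv u i = b i) -> bitv u t = b t.
  move=> t; elim: t {-2}t (leqnn t) => [|n IHn] t.
    by rewrite leqn0 => /eqP -> Hm; apply: H.
  move=> tn tm; apply: H => // i it; apply: IHn; last exact: ltn_trans it tm.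
  by rewrite -ltnS; exact: leq_trans it tn.
move=> t tm Hi; have E : LO u t = loF b t by rewrite LO_loF; exact: eq_loF.
rewrite /bitv E.
have m1 := @loF_mono R b _ _ tm; have m2 := @loF_mono2 R b _ _ tm.
move: m1 m2 => /=; case: (b t) => m1 m2.
  by apply: le_trans h1.
apply/negbTE; rewrite -ltNge; rewrite addr0 in m2; exact: lt_le_trans m2.
Qed.

Definition kh (L : nat) (h : seq bool) : nat := count id (take L.-1 h).
Definition bitsh (L : nat) (h : seq bool) (k : nat) : nat -> bool :=
  fun t => nth false h (L.-1 + t * L + k).
Definition qfun {R : realType} (L : nat) (h : seq bool) : R :=
  if (size h < L.-1)%N then (size h).+1%:R / L%:R
  else ((((size h - L.-1) %% L)%N)%:R + loF (bitsh L h (kh L h)) ((size h - L.-1) %/ L)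
        + w ((size h - L.-1) %/ L).+1) / L%:R.
Definition efun {R : realType} (L m : nat) (h : seq bool) : R :=
  ((kh L h)%:R + loF (bitsh L h (kh L h)) m + w m.+1) / L%:R.

Lemma kh_le L h : (kh L h <= L.-1)%N.
Proof.
rewrite /kh; apply: leq_trans (count_size _ _) _; rewrite size_take.
by case: ifP => // /negbT; rewrite -leqNgt.
Qed.

Lemma qfun_range (R : realType) L h : (0 < L)%N -> 0 <= (qfun L h : R) < 1.
Proof.
move=> L0; have L0' : 0 < (L%:R : R) by rewrite ltr0n.
rewrite /qfun; case: ifP => Hs.
  rewrite divr_ge0 //= ltr_pdivrMr // mul1r ltr_nat.
  by move: Hs; clear -L0; case: L L0 => //= n; rewrite ltnS.
set j := (_ %% L)%N; set t := (_ %/ L)%N.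
have jL : (j < L)%N by rewrite ltn_mod.
have h1 := loF_ge0 R (bitsh L h (kh L h)) t.
have h2 := loF_le1 R (bitsh L h (kh L h)) t.
have h3 := w_gt0 R t.+1; have h4 := wS R t.
have jr : (j%:R : R) + 1 <= L%:R by rewrite natr1 ler_nat.
apply/andP; split.
  apply: divr_ge0 => //; apply: addr_ge0 => //; last exact: ltW.
  by apply: addr_ge0.
rewrite ltr_pdivrMr // mul1r; lra.
Qed.

Lemma efun_range (R : realType) L m h : (0 < L)%N -> 0 <= (efun L m h : R) < 1.
Proof.
move=> L0; have L0' : 0 < (L%:R : R) by rewrite ltr0n.
rewrite /efun.
have jL : ((kh L h)%:R : R) + 1 <= L%:R.
  rewrite natr1 ler_nat; have := kh_le L h; lia.
have h1 := loF_ge0 R (bitsh L h (kh L h)) m.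
have h2 := loF_le1 R (bitsh L h (kh L h)) m.
have h3 := w_gt0 R m.+1; have h4 := wS R m.
have h5 : 0 <= ((kh L h)%:R : R) by [].
apply/andP; split.
  apply: divr_ge0 => //; lra.
rewrite ltr_pdivrMr // mul1r; lra.
Qed.

Definition strat (R : realType) (L m : nat) (HL : (0 < L)%N) : strategy R (L.-1 + m * L) :=
  @Strategy R _ 1 erefl (fun h _ => qfun L h) (fun h _ => efun L m h)
    (fun h _ => @qfun_range R L h HL) (fun h _ => @efun_range R L m h HL).

Definition kv {R : realType} (L : nat) (v : R) : nat := `|Num.floor (L%:R * v)|%N.
Definition uv {R : realType} (L : nat) (v : R) : R := L%:R * v - (kv L v)%:R.

Lemma kv_prop (R : realType) L (v : R) : (0 < L)%N -> 0 <= v < 1 ->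
  [/\ (kv L v < L)%N, (kv L v)%:R <= L%:R * v & L%:R * v < (kv L v)%:R + 1].
Proof.
move=> L0 /andP [v0 v1].
have Lv0 : 0 <= L%:R * v by apply: mulr_ge0.
have fl0 : 0 <= Num.floor (L%:R * v) by rewrite floor_ge0.
have E : ((kv L v)%:R : R) = (Num.floor (L%:R * v))%:~R.
  by rewrite /kv natr_absz ger0_norm.
have Hf := floor_le (L%:R * v).
have Hf2 : L%:R * v < (Num.floor (L%:R * v) + 1)%:~R.
  exact: floorD1_gt.
rewrite E; split => //; last by rewrite intrD in Hf2.
have : ((kv L v)%:R : R) < L%:R.
  rewrite E; apply: le_lt_trans Hf _.
  by rewrite -[X in _ < X]mulr1 ltr_pM2l // ltr0n.
by rewrite ltr_nat.
Qed.

Definition IQ {R : realType} (L : nat) (v : R) (n : nat) : R :=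
  if (n < L.-1)%N then n.+1%:R / L%:R
  else ((((n - L.-1) %% L)%N)%:R + LO (uv L v) ((n - L.-1) %/ L)
        + w ((n - L.-1) %/ L).+1) / L%:R.

Lemma count_lt K n : count (fun i => (i < K)%N) (iota 0 n) = minn K n.
Proof.
elim: n => [|n IH]; first by rewrite minn0.
rewrite -addn1 iotaD count_cat IH /= add0n addn0; lia.
Qed.

Lemma kh_mkseq (R : realType) L (v : R) n : (0 < L)%N -> 0 <= v < 1 -> (L.-1 <= n)%N ->
  kh L (mkseq (fun i => IQ L v i <= v) n) = kv L v.
Proof.
move=> L0 Hv Hn; have [kL k1 k2] := kv_prop R L v L0 Hv.
have L0' : 0 < (L%:R : R) by rewrite ltr0n.
rewrite /kh /mkseq -map_take take_iota (minn_idPl Hn) count_map.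
rewrite (@eq_in_count _ _ (fun i => (i < kv L v)%N)); last first.
  move=> i; rewrite mem_iota add0n => /andP [_ Hi] /=.
  rewrite /IQ Hi ler_pdivrMr // mulrC.
  case: (leqP i.+1 (kv L v)) => H.
    by apply: le_trans k1; rewrite ler_nat.
  apply/negbTE; rewrite -ltNge; apply: lt_le_trans k2 _.
  by rewrite natr1 ler_nat.
by rewrite count_lt; apply/minn_idPl; lia.
Qed.

Lemma qfun_mkseq (R : realType) L (v : R) n : (0 < L)%N -> 0 <= v < 1 ->
  qfun L (mkseq (fun i => IQ L v i <= v) n) = IQ L v n.
Proof.
move=> L0 Hv; have [kL k1 k2] := kv_prop R L v L0 Hv.
have L0' : 0 < (L%:R : R) by rewrite ltr0n.
rewrite /qfun size_mkseq; case: ifP => Hn; first by rewrite /IQ Hn.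
have Hn' : (L.-1 <= n)%N by rewrite leqNgt Hn.
rewrite /IQ Hn kh_mkseq //; congr (_ / _); congr (_ + _ + _).
rewrite LO_loF; apply: eq_loF => i Hi.
rewrite /bitsh nth_mkseq; last first.
  have H1 := leq_divM (n - L.-1) L.
  have H2 : (i.+1 * L <= (n - L.-1) %/ L * L)%N by rewrite leq_mul2r Hi orbT.
  rewrite mulSn in H2; lia.
rewrite /IQ ifF; last by apply/negbTE; rewrite -leqNgt; lia.
have E1 : (L.-1 + i * L + kv L v - L.-1 = i * L + kv L v)%N by lia.
rewrite E1 modnMDl (modn_small kL) divnMDl // (divn_small kL) addn0.
rewrite /bitv /uv ler_pdivrMr // mulrC lerBrDl; apply/idP/idP; lra.
Qed.

Lemma responses_eq (R : realType) L (v : R) (q : seq bool -> R) n :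
  (0 < L)%N -> 0 <= v < 1 -> (forall h, q h = qfun L h) ->
  responses q v n = mkseq (fun i => IQ L v i <= v) n.
Proof.
move=> L0 Hv Hq; elim: n => [|n IH] //=.
by rewrite IH Hq qfun_mkseq // mkseqS.
Qed.

Definition ov {R : realFieldType} (p q : R) : R := if p < q then q - p else 0.

Lemma ov_ge0 (R : realFieldType) (p q : R) : 0 <= ov p q.
Proof. by rewrite /ov; case: ifP => // H; rewrite subr_ge0 ltW. Qed.

Lemma sum_ind (R : realFieldType) (A : R) (z : int) n : 0 <= A ->
  \sum_(k < n) (if k%:Z == z then A else 0) <= A.
Proof.
move=> A0; elim: n => [|n IH]; first by rewrite big_ord0.
rewrite big_ord_recr /=; case: eqP => H; last by rewrite addr0.
rewrite big1 ?add0r // => k _; case: eqP => // Hk.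
by move: (ltn_ord k); rewrite -H in Hk; case: Hk => ->; rewrite ltnn.
Qed.

Lemma natz_R (R : realType) (k : nat) : ((k%:Z)%:~R : R) = k%:R.
Proof. by []. Qed.

Lemma int_split (k : nat) (z : int) :
  (k%:Z + 1 <= z) \/ k%:Z = z \/ k%:Z = z + 1 \/ (z + 2 <= k%:Z).
Proof. lia. Qed.
Lemma int_neq1 (z : int) : (z == z + 1) = false. Proof. lia. Qed.
Lemma int_neq2 (z : int) : (z + 1 == z) = false. Proof. lia. Qed.

Lemma overlap_sum (R : realType) (L : nat) (a W c d : R) : (0 < L)%N ->
  0 <= a -> 0 <= W -> a + W <= 1 -> d - c <= L%:R^-1 ->
  \sum_(k < L) ov (Num.max ((k%:R + a) / L%:R) c) (Num.min ((k%:R + a + W) / L%:R) d)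
  <= W / L%:R.
Proof.
move=> L0 a0 W0 aW dc.
have L0' : 0 < (L%:R : R) by rewrite ltr0n.
set C := c * L%:R.
set z := Num.floor (C - a).
set e := C - a - z%:~R.
have e0 : 0 <= e by rewrite /e subr_ge0 floor_le.
have e1 : e < 1.
  have := floorD1_gt (C - a); rewrite -/z intrD /e; lra.
set A := Num.max (W - e) 0.
set B := Num.min e W.
have A0 : 0 <= A by rewrite /A le_max lexx orbT.
have A1 : W - e <= A by rewrite /A le_max lexx.
have B0 : 0 <= B by rewrite /B le_min e0 W0.
have B1 : forall x, x <= e -> x <= W -> x <= B by move=> x h1 h2; rewrite /B le_min h1 h2.
have AB : A + B <= W.
  rewrite /A /B maxEle minEle; case: ifP => H1; case: ifP => H2; lra.
have dc' : d * L%:R - C <= 1.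
  by move: dc; rewrite -(ler_pM2r L0') mulVf ?gt_eqF // mulrBl.
apply: (@le_trans _ _ (\sum_(k < L) ((if k%:Z == z then A else 0)
   + (if k%:Z == z + 1 then B else 0)) / L%:R)); last first.
  rewrite -mulr_suml big_split /= ler_pM2r ?invr_gt0 //.
  apply: le_trans AB; apply: lerD; exact: sum_ind.
apply: ler_sum => k _.
set p := Num.max _ c; set q := Num.min _ d.
have hp1 : (k%:R + a) / L%:R <= p by rewrite /p le_max lexx.
have hp2 : c <= p by rewrite /p le_max lexx orbT.
have hq1 : q <= (k%:R + a + W) / L%:R by rewrite /q ge_min lexx.
have hq2 : q <= d by rewrite /q ge_min lexx orbT.
rewrite /ov; case: ifP => pq.
  2: by apply: divr_ge0 => //; apply: addr_ge0; case: ifP.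
rewrite ler_pdivlMr // mulrBl.
rewrite ler_pdivrMr // in hp1; rewrite ler_pdivlMr // in hq1.
have hp2' : C <= p * L%:R by rewrite /C ler_pM2r.
have hq2' : q * L%:R <= d * L%:R by rewrite ler_pM2r.
have pq' : p * L%:R < q * L%:R by rewrite ltr_pM2r.
have ez : C = a + z%:~R + e by rewrite /e; lra.
move: (p * L%:R) (q * L%:R) hp1 hp2' hq1 hq2' pq' => P Q hp1 hp2' hq1 hq2' pq'.
clearbody p q A B e z C.
have := int_split k z.
case=> [H|[H|[H|H]]].
- have : ((k%:Z + 1)%:~R : R) <= z%:~R by rewrite ler_int.
  rewrite intrD natz_R => H'; lra.
- rewrite H eqxx; rewrite int_neq1.
  have Hk : (k%:R : R) = z%:~R by rewrite -natz_R H.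
  rewrite addr0; lra.
- rewrite H; rewrite int_neq2.
  rewrite eqxx add0r.
  have Hk : (k%:R : R) = z%:~R + 1 by rewrite -natz_R H intrD.
  apply: B1; lra.
- have : ((z + 2)%:~R : R) <= k%:Z%:~R by rewrite ler_int.
  rewrite intrD natz_R => H'; lra.
Qed.

Local Open Scope classical_set_scope.

Lemma bitsh_mkseq (R : realType) L (v : R) n i : (0 < L)%N -> 0 <= v < 1 ->
  (L.-1 + i.+1 * L <= n)%N ->
  bitsh L (mkseq (fun i => IQ L v i <= v) n) (kv L v) i = bitv (uv L v) i.
Proof.
move=> L0 Hv Hi; have [kL k1 k2] := kv_prop R L v L0 Hv.
have L0' : 0 < (L%:R : R) by rewrite ltr0n.
rewrite /bitsh nth_mkseq; last by rewrite mulSn in Hi; lia.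
rewrite /IQ ifF; last by apply/negbTE; rewrite -leqNgt; lia.
have E1 : (L.-1 + i * L + kv L v - L.-1 = i * L + kv L v)%N by lia.
rewrite E1 modnMDl (modn_small kL) divnMDl // (divn_small kL) addn0.
rewrite /bitv /uv ler_pdivrMr // mulrC lerBrDl; apply/idP/idP; lra.
Qed.

Lemma efun_mkseq (R : realType) L m (v : R) : (0 < L)%N -> 0 <= v < 1 ->
  `|efun L m (mkseq (fun i => IQ L v i <= v) (L.-1 + m * L)) - v| <= w m.+1 / L%:R.
Proof.
move=> L0 Hv; have [kL k1 k2] := kv_prop R L v L0 Hv.
have L0' : 0 < (L%:R : R) by rewrite ltr0n.
rewrite /efun kh_mkseq //; last exact: leq_addr.
have -> : loF (bitsh L (mkseq (fun i => IQ L v i <= v) (L.-1 + m * L)) (kv L v)) m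
   = LO (uv L v) m.
  rewrite LO_loF; apply: eq_loF => i Hi; apply: bitsh_mkseq => //.
  by rewrite leq_add2l leq_mul2r Hi orbT.
have Hu : 0 <= uv L v < 1 by rewrite /uv; apply/andP; split; lra.
have /andP [h1 h2] := LO_inv R (uv L v) m Hu.
have h3 := wS R m; have h4 := w_gt0 R m.+1.
have -> : ((kv L v)%:R + LO (uv L v) m + w m.+1) / L%:R - v
   = (LO (uv L v) m + w m.+1 - uv L v) / L%:R.
  rewrite /uv; field; exact: lt0r_neq0.
rewrite normrM (ger0_norm (x := L%:R^-1)); last by rewrite invr_ge0 ltW.
rewrite ler_pM2r ?invr_gt0 //.
rewrite ler_norml; apply/andP; split; lra.
Qed.

Lemma strat_acc (R : realType) L m (HL : (0 < L)%N) (eps : R) :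
  w m / L%:R <= eps ->
  probVY (strat R L m HL)
    (fun v y => `|learner_estimate (strat R L m HL) v y - v| <= eps / 2) = 1%E.
Proof.
move=> Heps.
rewrite /probVY /= big_ord1 invr1 mul1e.
rewrite (_ : [set v | _] = `[0%R, 1%R[%classic).
  rewrite lebesgue_measure_itv /= lte_fin ltr01.
  by rewrite oppr0 adde0.
apply/seteqP; split => v /=.
  by move=> [H _]; rewrite in_itv /=.
rewrite in_itv /= => Hv; split => //.
rewrite /learner_estimate /= (@responses_eq R L) //.

apply: le_trans (efun_mkseq R L m v HL Hv) _.
have -> : (w m.+1 : R) = w m / 2 by rewrite (wS R m); field.
rewrite mulrAC ler_pdivrMr // divfK //; exact: Heps.
Qed.

Definition lob {R : realType} {m : nat} (b : m.-tuple bool) : R :=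
  loF (fun t => nth false b t) m.

Definition Sb {R : realType} (L m : nat) (b : m.-tuple bool) : set R :=
  [set v | exists k, (k < L)%N /\
     ((k%:R + lob b) / L%:R <= v < (k%:R + lob b + w m) / L%:R)].

Definition bitsv {R : realType} (L m : nat) (v : R) : m.-tuple bool :=
  [tuple bitv (uv L v) t | t < m].

Lemma nth_bitsv (R : realType) L m (v : R) t : (t < m)%N ->
  nth false (bitsv L m v) t = bitv (uv L v) t.
Proof.
move=> tm; have := tnth_mktuple (fun t : 'I_m => bitv (uv L v) t) (Ordinal tm).
by rewrite (tnth_nth false).
Qed.

Lemma Sb_01 (R : realType) L m b (v : R) : (0 < L)%N -> Sb L m b v -> 0 <= v < 1.
Proof.
move=> L0 [k [kL /andP [h1 h2]]].
have L0' : 0 < (L%:R : R) by rewrite ltr0n.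
have a0 := loF_ge0 R (fun t => nth false b t) m.
have a1 := loF_le1 R (fun t => nth false b t) m.
rewrite -/(lob b) in a0 a1.
rewrite ler_pdivrMr // in h1; rewrite ltr_pdivlMr // in h2.
have kL' : (k%:R : R) + 1 <= L%:R by rewrite natr1 ler_nat.
have k0 : (0 : R) <= k%:R by [].
apply/andP; split; first by rewrite -(pmulr_lge0 _ L0'); lra.
have : v * L%:R < L%:R by lra.
by rewrite -[X in _ < X]mul1r ltr_pM2r.
Qed.

Lemma Sb_char (R : realType) L m b (v : R) : (0 < L)%N -> 0 <= v < 1 ->
  Sb L m b v <-> (forall t, (t < m)%N -> bitv (uv L v) t = nth false b t).
Proof.
move=> L0 Hv; have [kL k1 k2] := kv_prop R L v L0 Hv.
have L0' : 0 < (L%:R : R) by rewrite ltr0n.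
have Hu : 0 <= uv L v < 1 by rewrite /uv; apply/andP; split; lra.
rewrite cell_char //; rewrite -/(lob b).
have a0 := loF_ge0 R (fun t => nth false b t) m.
have a1 := loF_le1 R (fun t => nth false b t) m.
have w0 := w_gt0 R m.
rewrite -/(lob b) in a0 a1.
split.
  move=> [k [kL' /andP [h1 h2]]].
  rewrite ler_pdivrMr // in h1; rewrite ltr_pdivlMr // in h2.
  have kk : kv L v = k.
    rewrite /kv (@floor_def _ _ k%:Z); first by [].
    rewrite natz_R intrD natz_R; apply/andP; split; lra.
  rewrite /uv kk; apply/andP; split; lra.
move=> /andP [h1 h2]; exists (kv L v); split => //.
rewrite ler_pdivrMr // ltr_pdivlMr //; rewrite /uv in h1 h2.
apply/andP; split; lra.
Qed.

Lemma Sb_bitsv (R : realType) L m (v : R) : (0 < L)%N -> 0 <= v < 1 ->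
  Sb L m (bitsv L m v) v.
Proof.
move=> L0 Hv; apply/Sb_char => // t tm; by rewrite nth_bitsv.
Qed.

Lemma Sb_uniq (R : realType) L m b b' (v : R) : (0 < L)%N ->
  Sb L m b v -> Sb L m b' v -> b = b'.
Proof.
move=> L0 H1 H2; have Hv := @Sb_01 R L m b v L0 H1.
move/(@Sb_char R L m _ v L0 Hv): H1 => H1; move/(@Sb_char R L m _ v L0 Hv): H2 => H2.
apply: eq_from_tnth => i; rewrite !(tnth_nth false) -H1 ?H2 //.
Qed.

Definition IQb {R : realType} (L m : nat) (b : m.-tuple bool) (n : nat) : R :=
  if (n < L.-1)%N then n.+1%:R / L%:R
  else ((((n - L.-1) %% L)%N)%:R + loF (fun t => nth false b t) ((n - L.-1) %/ L)
        + w ((n - L.-1) %/ L).+1) / L%:R.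

Definition QS {R : realType} (L m : nat) (b : m.-tuple bool) : seq R :=
  [seq IQb L m b n | n <- iota 0 (L.-1 + m * L)].

Lemma queries_Sb (R : realType) L m (HL : (0 < L)%N) b (v : R) y :
  Sb L m b v -> queries (strat R L m HL) v y = QS L m b.
Proof.
move=> Hb; have Hv := @Sb_01 R L m b v HL Hb.
move/(@Sb_char R L m b v HL Hv): Hb => Hb.
rewrite /queries /QS; apply/eq_in_map => n; rewrite mem_iota add0n => /andP [_ Hn] /=.
rewrite (@responses_eq R L) // qfun_mkseq // /IQ /IQb.
case: ifP => // Hn1; congr (_ / _); congr (_ + _ + _).
rewrite LO_loF; apply: eq_loF => i Hi; apply: Hb.
apply: leq_trans Hi _; rewrite leq_eqVlt; apply/orP; right.
rewrite ltn_divLR //; rewrite ltnNge in Hn1; lia.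
Qed.

Lemma Sb_meas (R : realType) L m b : measurable (Sb L m b : set R).
Proof.
rewrite (_ : Sb L m b = \bigcup_k (if (k < L)%N then
    `[(k%:R + lob b) / L%:R, (k%:R + lob b + w m) / L%:R[%classic else set0)).
  apply: bigcupT_measurable => k; case: ifP => _ //; exact: measurable_itv.
apply/seteqP; split => v /=.
  move=> [k [kL H]]; exists k => //; rewrite kL /= in_itv /=; exact: H.
move=> [k _]; case: ifP => // kL; rewrite /= in_itv /= => H; exists k; split => //.
Qed.

Definition Eb {R : realType} (L m : nat) (b : m.-tuple bool) (delta : R) : set (R * R) :=
  [set p | Sb L m b p.1 /\ `|p.2 - p.1| <= delta / 2].

Lemma Eb_meas (R : realType) L m b (delta : R) : measurable (Eb L m b delta).
Proof.
rewrite (_ : Eb L m b delta = (Sb L m b `*` setT) `&`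
   (setT `&` ((fun p : R * R => `|p.2 - p.1|) @^-1` `]-oo, delta / 2]%classic))).
  apply: measurableI; first by apply: measurableX => //; exact: Sb_meas.
  have mg : measurable_fun setT (fun p : R * R => `|p.2 - p.1|).
    have h1 := @measurable_snd _ _ R R.
    have h2 := @measurable_fst _ _ R R.
    have h3 := measurable_realfun.measurable_funB h1 h2.
    have h4 := @measurable_realfun.normr_measurable R setT.
    have := measurableT_comp h4 h3.
    exact.
  by apply: mg => //; exact: measurable_itv.
apply/seteqP; split => p /=.
  by move=> [H1 H2]; split => //; split => //=; rewrite in_itv.
by move=> [[H1 _] [_ /=]]; rewrite in_itv /= => H2.
Qed.

Lemma lebS (R : realType) (A B : set R) : A `<=` B ->
  (lebesgue_measure A <= lebesgue_measure B)%E.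
Proof. move=> AB; exact: (le_mu_ext (wlength (idfun : R -> R)) AB). Qed.

Lemma lebU2 (R : realType) (A B : set R) :
  (lebesgue_measure (A `|` B) <= lebesgue_measure A + lebesgue_measure B)%E.
Proof. exact: (@outer_measureU2 _ R (mu_ext (wlength (idfun : R -> R)))). Qed.

Lemma lebSub (R : realType) (F : nat -> set R) n :
  (lebesgue_measure (\big[setU/set0]_(i < n) F i) <= \sum_(i < n) lebesgue_measure (F i))%E.
Proof. exact: (@outer_measure_subadditive _ R (mu_ext (wlength (idfun : R -> R)))). Qed.

Lemma ysec_bound (R : realType) L m b (delta x : R) : (0 < L)%N -> 0 < delta ->
  delta <= L%:R^-1 ->
  (lebesgue_measure (ysection (Eb L m b delta) x) <= (w m / L%:R)%:E)%E.
Proof.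
move=> L0 d0 dL.
pose F k := `[Num.max ((k%:R + lob b) / L%:R) (x - delta / 2),
              Num.min ((k%:R + lob b + w m) / L%:R) (x + delta / 2)]%classic : set R.
apply: (@le_trans _ _ (lebesgue_measure (\big[setU/set0]_(k < L) F k))).
  apply: lebS => v; rewrite /ysection /= inE /Eb /= => -[[k [kL /andP [h1 h2]]] H].
  rewrite -bigcup_mkord; exists k => //; rewrite /F /= in_itv /=.
  move: H; rewrite ler_norml => /andP [H1 H2].
  rewrite ge_max le_min h1 (ltW h2); apply/andP; split; apply/andP; split => //; lra.
apply: le_trans; first exact: (@lebSub R F L).

rewrite (eq_bigr (fun k : 'I_L => (ov (Num.max ((k%:R + lob b) / L%:R) (x - delta / 2))
    (Num.min ((k%:R + lob b + w m) / L%:R) (x + delta / 2)))%:E)); last first.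
  move=> k _; rewrite /F lebesgue_measure_itv /= lte_fin /ov.
  by case: ifP => //; rewrite EFinB.
rewrite sumEFin lee_fin; apply: overlap_sum => //.
- exact: loF_ge0.
- exact/ltW/w_gt0.
- exact: loF_le1.
- lra.
Qed.

Lemma Eb_meas' (R : realType) L m b (delta : R) :
  measurable (Eb L m b delta : set (measurableTypeR R * measurableTypeR R)).
Proof. exact: Eb_meas. Qed.

Lemma Fb_bound (R : realType) L m b (delta : R) (mu : probability (measurableTypeR R) R) :
  (0 < L)%N -> 0 < delta -> delta <= L%:R^-1 ->
  (\int[lebesgue_measure]_(v in setT) (mu \o xsection (Eb L m b delta)) v
     <= (w m / L%:R)%:E)%E.
Proof.
move=> L0 d0 dL.
have mE := Eb_meas R L m b delta.
rewrite -(indic_fubini_tonelli_FE mu mE) (indic_fubini_tonelli lebesgue_measure mu mE).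
have mE' : measurable (Eb L m b delta : set (measurableTypeR R * measurableTypeR R)).
  exact: mE.
rewrite (indic_fubini_tonelli_GE lebesgue_measure mE').
apply: (@le_trans _ _ (\int[mu]_(x in setT) (cst (w m / L%:R)%:E x))%E).
  apply: ge0_le_integral => //.
    exact: (measurable_fun_ysection lebesgue_measure mE').
  by move=> x _; exact: ysec_bound.
rewrite (@integral_cst _ _ _ mu setT measurableT).
have E1 : forall x : \bar R, x = 1%E -> ((w m / L%:R)%R%:E * x <= (w m / L%:R)%R%:E)%E.
  by move=> x ->; rewrite mule1.
apply: E1; exact: probability_setT.
Qed.

Lemma strat_priv (R : realType) L m (HL : (0 < L)%N) (delta : R) (psi : adversary R) :
  0 < delta -> delta <= L%:R^-1 ->
  (adversary_success (strat R L m HL) psi delta <= (L%:R^-1)%:E)%E.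
Proof.
move=> d0 dL.
rewrite /adversary_success /= big_ord1 invr1 mul1e.
have eqf : {in `[0%R, 1%R[%classic,
  (fun v => \sum_(b : m.-tuple bool) (psi (QS L m b) \o xsection (Eb L m b delta)) v)
  =1 (fun v => psi (queries (strat R L m HL) v 0) [set x | `|x - v| <= delta / 2])}.
  move=> v; rewrite inE /= in_itv /= => Hv.
  have Hb := @Sb_bitsv R L m v HL Hv.
  rewrite (bigD1 (bitsv L m v)) //= big1 ?adde0.
    rewrite (@queries_Sb R L m HL _ v 0 Hb); congr (psi _ _).
    apply/seteqP; split => x; rewrite /xsection /= inE /Eb /=; first by case.
    by move=> H; split.
  move=> b Hb'; rewrite (_ : xsection _ v = set0) ?measure0 //.
  apply/seteqP; split => x //; rewrite /xsection /= inE /Eb /= => -[H _].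
  by move/negP: Hb'; apply; apply/eqP; apply: (@Sb_uniq R L m _ _ v HL H Hb).
rewrite -(@eq_integral _ (measurableTypeR R) R lebesgue_measure _ _ _ eqf).
have mF := fun b => measurable_fun_xsection (psi (QS L m b)) (Eb_meas' R L m b delta).
apply: le_trans.
  apply: (ge0_subset_integral _ _ measurableT) => //.
  - by apply: emeasurable_sum => b; exact: mF.
  - by move=> v _; apply: sume_ge0 => b _; exact: measure_ge0.
rewrite (ge0_integral_sum _ measurableT mF); last by move=> b v _; exact: measure_ge0.
apply: le_trans.
  apply: lee_sum => b _; exact: (@Fb_bound R L m b delta _ HL d0 dL).
rewrite sumEFin lee_fin big_const card_tuple card_bool iter_addr addr0.
have h2 : (2 : R) ^+ m != 0 by rewrite expf_neq0.
rewrite -(mulr_natr (w m / L%:R)) natrX /w mulrAC mulVf // mul1r.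
by [].
Qed.

Definition lowset {R : realType} (eps : R) (q e : seq bool -> R) n : set R :=
  [set v | `|e (responses q v n) - v| <= eps / 2].

Lemma lowb (R : realType) (eps : R) (q : seq bool -> R) n : 0 < eps ->
  forall e : seq bool -> R,
  (lebesgue_measure (lowset eps q e n) <= (2 ^+ n * eps)%:E)%E.
Proof.
move=> e0; elim: n => [|n IH] e.
  apply: (@le_trans _ _ (lebesgue_measure
      (`[e [::] - eps / 2, e [::] + eps / 2]%classic : set R))).
    apply: lebS => v; rewrite /lowset /= in_itv /= ler_norml => /andP [h1 h2].
    apply/andP; split; lra.
  rewrite lebesgue_measure_itv /= lte_fin ifT; last by lra.
  rewrite -EFinB lee_fin expr0 mul1r; lra.
apply: (@le_trans _ _ (lebesgue_measure
   (lowset eps q (fun h => e (rcons h true)) n `|`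
    lowset eps q (fun h => e (rcons h false)) n))).
  apply: lebS => v; rewrite /lowset /=.
  by case: (q (responses q v n) <= v) => H; [left|right]; exact: H.
apply: le_trans; first exact: lebU2.
apply: le_trans; first exact: (leeD (IH _) (IH _)).
by rewrite -EFinD lee_fin exprS; lra.
Qed.

Lemma priv_lower (R : realType) N (phi : strategy R N) (eps delta : R) L :
  0 < eps -> B_private phi eps delta L -> 1 <= 2 ^+ N * eps.
Proof.
move=> e0 [H _]; move: H; rewrite /probVY => H.
have s0 : 0 < ((seeds phi)%:R : R) by rewrite ltr0n seeds_gt0.
rewrite -lee_fin -H.
apply: (@le_trans _ _ (((seeds phi)%:R^-1)%:E * \sum_(y < seeds phi) (2 ^+ N * eps)%:E)%E).
  apply: lee_wpmul2l; first by rewrite lee_fin invr_ge0 ltW.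
  apply: lee_sum => y _; apply: le_trans; last exact: (@lowb R eps (fun h => query phi h y) N e0 (fun h => estimate phi h y)).
  apply: lebS => v [_ Hv]; exact: Hv.
rewrite sumEFin sumr_const card_ord -EFinM lee_fin.
rewrite -(mulr_natr (2 ^+ N * eps)) mulrCA mulVf ?mulr1 //.
by rewrite pnatr_eq0 -lt0n seeds_gt0.
Qed.

Local Close Scope classical_set_scope.

Lemma log2_le (R : realType) (x : R) (n : nat) : 0 < x -> x <= 2 ^+ n -> log2 x <= n%:R.
Proof.
move=> x0 xn; have l2 : 0 < ln (2 : R) by apply: ln_gt0; lra.
rewrite /log2 ler_pdivrMr // mulr_natl.
by rewrite -(ler_ln (x:=x)) ?posrE ?exprn_gt0 // lnXn // in xn.
Qed.

Lemma log2_ge (R : realType) (x : R) (n : nat) : 0 < x -> log2 x <= n%:R -> x <= 2 ^+ n.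
Proof.
move=> x0 xn; have l2 : 0 < ln (2 : R) by apply: ln_gt0; lra.
rewrite /log2 ler_pdivrMr // mulr_natl in xn.
by rewrite -(ler_ln (x:=x)) ?posrE ?exprn_gt0 // lnXn.
Qed.

Theorem proposition3 (R : realType) (eps delta : R) (L : nat) :
  0 < eps -> 0 < delta -> (2 <= L)%N ->
  2 * eps < delta -> delta <= L%:R^-1 ->
  exists N : nat, is_NBstar eps delta L N /\
    log2 (eps^-1) <= N%:R /\
    N%:R <= (L%:R : R) * ((Num.ceil (log2 ((L%:R * eps)^-1)))%:~R : R) + L%:R - 1.
Proof.
move=> e0 d0 L2 ed dL.
have L0 : (0 < L)%N by apply: leq_trans L2.
have L0' : 0 < (L%:R : R) by rewrite ltr0n.
have Le0 : 0 < L%:R * eps by apply: mulr_gt0.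
have Le1 : L%:R * eps <= 1.
  have : L%:R * delta <= 1 by rewrite -[X in _ <= X](mulfV (lt0r_neq0 L0')) ler_pM2l.
  have : L%:R * eps <= L%:R * delta by rewrite ler_pM2l //; lra.
  lra.
set X := (L%:R * eps)^-1.
have X1 : 1 <= X by rewrite /X invf_ge1.
have X0 : 0 < X by lra.
have l2 : 0 < ln (2 : R) by apply: ln_gt0; lra.
have lg0 : 0 <= log2 X by rewrite /log2; apply: divr_ge0; [exact: ln_ge0 | exact: ltW].
set c := Num.ceil (log2 X).
have c0 : 0 <= c by rewrite /c ceil_ge0; lra.
set m := `|c|%N.
have cm : (m%:R : R) = c%:~R by rewrite /m natr_absz ger0_norm.
have wm : w m / L%:R <= eps.
  have H : X <= 2 ^+ m by apply: log2_ge => //; rewrite cm; exact: ceil_ge.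
  have : (2 ^+ m)^-1 <= X^-1.
    by rewrite lef_pV2 ?posrE ?exprn_gt0.
  rewrite /X invrK /w => H2.
  by rewrite ler_pdivrMr // mulrC.
pose P n := exists phi : strategy R n, B_private phi eps delta L.
have Pex : P (L.-1 + m * L)%N.
  exists (strat R L m L0); split; first exact: strat_acc.
  by move=> psi _; apply: strat_priv.
have exP : exists n, `[< P n >] by exists (L.-1 + m * L)%N; apply/asboolP.
case: (ex_minnP exP) => N /asboolP PN Nmin.
exists N; split.
  split => // M PM; apply: Nmin; exact/asboolP.
have NN : (N <= L.-1 + m * L)%N by apply: Nmin; exact/asboolP.
split.
  case: PN => phi Hphi; have H := @priv_lower R N phi eps delta L e0 Hphi.
  apply: log2_le; first by rewrite invr_gt0.
  by rewrite -(ler_pM2r e0) mulVf ?gt_eqF.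
apply: le_trans (_ : ((L.-1 + m * L)%N%:R : R) <= _).
  by rewrite ler_nat.
rewrite natrD natrM cm -/c.
have -> : (L.-1%:R : R) = L%:R - 1.
  by rewrite -{2}(prednK L0) -natr1 addrK.
lra.
Qed.
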